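(* (1) For all $j\in\mathbb Z\cup\{\infty\}$ the first coordinate $x:\mathbb R^2\to\mathbb R$ descends to $x_j:X_j\to\mathbb R$ (i.e. $x=x_j\circ\hat\pi^j$), and for $j\in\mathbb Z$ the map $\hat y_j:\mathbb R^2\to S^1(m_v^{-j})$, $\hat y_j(x,y)=y\bmod m_v^{-j}$, descends to $y_j:X_j\to S^1(m_v^{-j})$. (2) If $\sigma$ is a $2$-cell of $X_j$, then $x_j(\sigma)$ is an interval of length $m^{-j}$ whose endpoints are the images of the two vertical $1$-cells of $\sigma$. (3) If $p,p'\in X_j$ and $\pi_j(p)=\pi_j(p')$, then $d_{S^1}(y_j(p),y_j(p'))\le2m_v^{-(j+1)}$. (4) If $\bar\sigma$ is a $2$-cell of $X_{j+1}$, then $y_j(\pi_j^{-1}(\bar\sigma))$ has diameter at most $5m_v^{-(j+1)}$.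
   Context: Standing construction ($n=2$). Fix an integer $L\ge100$, $m=4$, $m_v=3L$. For $j\in\mathbb Z$, $Y_j$ is the cell complex on $\mathbb R^2$ given by the tiling by rectangles $[am^{-j},(a+1)m^{-j}]\times[bm_v^{-j},(b+1)m_v^{-j}]$, $a,b\in\mathbb Z$; a $1$-cell of $Y_j$ is vertical if it is a translate of $\{0\}\times[0,m_v^{-j}]$. Let $\Phi(x,y)=(m^{-1}x,m_v^{-1}y)$. For $k,\ell\in\mathbb Z$, $i\in\{1,2,3\}$, let $a_{k,\ell,i}=\{k+\tfrac i4\}\times[(3\ell+i-1)m_v^{-1},(3\ell+i)m_v^{-1}]$. $\mathcal R$ is the equivalence relation on $\mathbb R^2$ generated by $p\sim p+(0,m_v^{-1})$ for $p\in a_{k,\ell,i}$. $\Phi^j_*\mathcal R=\{(\Phi^jp,\Phi^jq):(p,q)\in\mathcal R\}$; $\mathcal R_j$ is generated by $\Phi^i_*\mathcal R$, $i<j$; $\mathcal R_\infty$ by all of them. For $j\in\mathbb Z\cup\{\infty\}$, $X_j=\mathbb R^2/\mathcal R_j$, $\hat\pi^j$ the quotient map, $\pi_j:X_j\to X_{j+1}$ induced map. $X_j$ carries the CW structure whose open cells are images under $\hat\pi^j$ of open cells of $Y_j$ (vertical cells are images of vertical cells). $S^1(r)=\mathbb R/r\mathbb Z$ with the quotient metric $d_{S^1}$. *)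

(* Defs.v *)
From Stdlib Require Import Reals ZArith Relations.
Open Scope R_scope.

Definition pt := (R * R)%type.

Definition mm : R := 4.
Definition mv (L : nat) : R := 3 * INR L.

Definition Phi (L : nat) (j : Z) (p : pt) : pt :=
  (powerRZ mm (- j) * fst p, powerRZ (mv L) (- j) * snd p).

Definition baseR (L : nat) (p q : pt) : Prop :=
  exists (k l i : Z), (1 <= i <= 3)%Z /\
    fst p = IZR k + IZR i / 4 /\
    (3 * IZR l + IZR i - 1) / mv L <= snd p <= (3 * IZR l + IZR i) / mv L /\
    q = (fst p, snd p + / mv L).

Definition RelR (L : nat) : relation pt := clos_refl_sym_trans pt (baseR L).

Definition pushR (L : nat) (j : Z) (p q : pt) : Prop :=
  exists p0 q0, RelR L p0 q0 /\ p = Phi L j p0 /\ q = Phi L j q0.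

(* j in Z ∪ {∞} is encoded as option Z, None = ∞.
   R_j generated by Phi^i_* R, i < j; R_∞ by all of them. *)
Definition Rj (L : nat) (J : option Z) : relation pt :=
  clos_refl_sym_trans pt (fun p q => exists i : Z,
    match J with Some j => (i < j)%Z | None => True end /\ pushR L i p q).

Definition eqmod (r s t : R) : Prop := exists k : Z, s - t = IZR k * r.

(* quotient metric on S^1(r) = R / rZ, on representatives *)
Definition dS1 (r s t : R) : R :=
  r * Rmin (frac_part ((s - t) / r)) (1 - frac_part ((s - t) / r)).

(* Saturation of a set of R^2 under R_j: represents the image \hat\pi^j(S) in X_j
   (as an R_j-saturated subset of R^2). *)
Definition sat (L : nat) (J : option Z) (S : pt -> Prop) (p : pt) : Prop :=
  exists q, S q /\ Rj L J p q.

Definition ximg (S : pt -> Prop) (t : R) : Prop := exists p, S p /\ fst p = t.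

Definition open_cell (L : nat) (j a b : Z) (p : pt) : Prop :=
  IZR a * powerRZ mm (- j) < fst p < (IZR a + 1) * powerRZ mm (- j) /\
  IZR b * powerRZ (mv L) (- j) < snd p < (IZR b + 1) * powerRZ (mv L) (- j).

Definition closed_cell (L : nat) (j a b : Z) (p : pt) : Prop :=
  IZR a * powerRZ mm (- j) <= fst p <= (IZR a + 1) * powerRZ mm (- j) /\
  IZR b * powerRZ (mv L) (- j) <= snd p <= (IZR b + 1) * powerRZ (mv L) (- j).

Definition vert_cell (L : nat) (j c b : Z) (p : pt) : Prop :=
  fst p = IZR c * powerRZ mm (- j) /\
  IZR b * powerRZ (mv L) (- j) <= snd p <= (IZR b + 1) * powerRZ (mv L) (- j).

(* Main.v *)
Require Import Defs.
From Stdlib Require Import Reals ZArith Relations Lra Lia.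
Open Scope R_scope.

Lemma mv_pos L : (100 <= L)%nat -> 0 < mv L.
Proof. intro H. unfold mv. apply le_INR in H. simpl in H. lra. Qed.

Lemma mv_IZR L : mv L = IZR (3 * Z.of_nat L).
Proof. unfold mv. rewrite mult_IZR, INR_IZR_INZ. reflexivity. Qed.

Lemma Int_part_unique x n : IZR n <= x < IZR n + 1 -> Int_part x = n.
Proof.
  intros [H1 H2]. destruct (base_Int_part x) as [B1 B2].
  assert (A1 : IZR (n - Int_part x) < 1) by (rewrite minus_IZR; lra).
  assert (A2 : IZR (n - Int_part x) > -1) by (rewrite minus_IZR; lra).
  apply lt_IZR in A1. apply Rgt_lt, lt_IZR in A2. lia.
Qed.

Lemma Int_part_IZR n : Int_part (IZR n) = n.
Proof. apply Int_part_unique. lra. Qed.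

Lemma Int_part_shift x m : Int_part (x + IZR m) = (Int_part x + m)%Z.
Proof.
  apply Int_part_unique. destruct (base_Int_part x). rewrite plus_IZR. lra.
Qed.

Lemma powerRZ_nat_int L n : (0 <= n)%Z -> exists M, powerRZ (mv L) n = IZR M.
Proof.
  intro Hn. rewrite <- (Z2Nat.id n Hn). rewrite <- pow_powerRZ, mv_IZR, pow_IZR.
  eexists; reflexivity.
Qed.

Lemma dS1_le r s t K : 0 < r -> dS1 r s t <= Rabs (s - t - IZR K * r).
Proof.
  intro Hr. unfold dS1, frac_part. set (z := (s - t) / r).
  destruct (base_Int_part z) as [B1 B2].
  assert (E : s - t - IZR K * r = r * (z - IZR K)) by (unfold z; field; lra).
  rewrite E, Rabs_mult, (Rabs_right r) by lra.
  apply Rmult_le_compat_l; [lra|].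
  destruct (Z_le_gt_dec K (Int_part z)) as [H|H].
  - apply IZR_le in H. eapply Rle_trans; [apply Rmin_l|]. rewrite Rabs_right; lra.
  - assert (H' : (K >= Int_part z + 1)%Z) by lia. apply Z.ge_le, IZR_le in H'.
    rewrite plus_IZR in H'.
    eapply Rle_trans; [apply Rmin_r|]. rewrite Rabs_left1; lra.
Qed.

Lemma relR_shift L p q : RelR L p q -> fst p = fst q /\ exists K, snd q - snd p = IZR K * / mv L.
Proof.
  induction 1 as [p q H| p | p q _ [IH1 [K IH2]] | p q r _ [IH1 [K1 IH2]] _ [IH3 [K2 IH4]]].
  - destruct H as (k & l & i & Hi & Hx & Hy & ->). simpl. split; [reflexivity|].
    exists 1%Z. simpl. ring.
  - split; [reflexivity|]. exists 0%Z. simpl. ring.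
  - split; [congruence|]. exists (- K)%Z. rewrite opp_IZR.
    replace (snd p - snd q) with (-(snd q - snd p)) by ring. rewrite IH2. ring.
  - split; [congruence|]. exists (K1 + K2)%Z. rewrite plus_IZR.
    replace (snd r - snd p) with ((snd r - snd q) + (snd q - snd p)) by ring.
    rewrite IH2, IH4. ring.
Qed.

Lemma pushR_shift L i p q : (100 <= L)%nat -> pushR L i p q ->
  fst p = fst q /\ exists K, snd q - snd p = IZR K * powerRZ (mv L) (-(i+1)).
Proof.
  intros HL (p0 & q0 & HR & -> & ->). destruct (relR_shift L p0 q0 HR) as [H1 [K H2]].
  unfold Phi; simpl. split; [congruence|]. exists K.
  replace (-(i+1))%Z with (-i + -1)%Z by lia.
  rewrite powerRZ_add by (apply Rgt_not_eq, mv_pos; auto). simpl.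
  replace (powerRZ (mv L) (- i) * snd q0 - powerRZ (mv L) (- i) * snd p0)
    with (powerRZ (mv L) (- i) * (snd q0 - snd p0)) by ring.
  rewrite H2. field. apply Rgt_not_eq, mv_pos; auto.
Qed.

Lemma scale_int L i j : (100 <= L)%nat -> (i < j)%Z -> exists M, powerRZ (mv L) (-(i+1)) = IZR M * powerRZ (mv L) (-j).
Proof.
  intros HL H. destruct (powerRZ_nat_int L (j - i - 1)) as [M HM]; [lia|].
  exists M. rewrite <- HM.
  rewrite <- powerRZ_add by (apply Rgt_not_eq, mv_pos; auto). f_equal. lia.
Qed.

Lemma Rj_fst L J p q : (100 <= L)%nat -> Rj L J p q -> fst p = fst q.
Proof.
  intros HL H. induction H as [p q [i [_ H]] | | | ]; try congruence.
  exact (proj1 (pushR_shift L i p q HL H)).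
Qed.

Lemma Rj_eqmod L j p q : (100 <= L)%nat -> Rj L (Some j) p q ->
  eqmod (powerRZ (mv L) (- j)) (snd p) (snd q).
Proof.
  intros HL H. induction H as [p q [i [Hij H]] | p | p q _ [K IH] | p q r _ [K1 IH1] _ [K2 IH2]].
  - destruct (pushR_shift L i p q HL H) as [_ [K HK]].
    destruct (scale_int L i j HL Hij) as [M HM].
    exists (- (K * M))%Z. rewrite opp_IZR, mult_IZR.
    replace (snd p - snd q) with (- (snd q - snd p)) by ring. rewrite HK, HM. ring.
  - exists 0%Z. simpl. ring.
  - exists (- K)%Z. rewrite opp_IZR.
    replace (snd q - snd p) with (- (snd p - snd q)) by ring. rewrite IH. ring.
  - exists (K1 + K2)%Z. rewrite plus_IZR.
    replace (snd p - snd r) with ((snd p - snd q) + (snd q - snd r)) by ring.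
    rewrite IH1, IH2. ring.
Qed.

Definition Xof j (p : pt) := fst p * powerRZ mm (j+1).
Definition sof L j p := snd p * powerRZ (mv L) (j+1) - IZR ((Int_part (Xof j p) mod 4) - 1).
Definition tof L j p := sof L j p - 3 * IZR (Int_part (sof L j p / 3)).
Definition offu t := if Rlt_dec t 1 then 0 else if Rlt_dec t 2 then 1
  else if Req_dec_T t 2 then 2 else 0.
Definition offs L j p := if Req_dec_T (Xof j p) (IZR (Int_part (Xof j p)))
  then offu (tof L j p) else 0.
Definition dl L j := powerRZ (mv L) (-(j+1)).
Definition cc L j p := snd p - offs L j p * dl L j.

Lemma offu_range t : 0 <= offu t <= 2.
Proof. unfold offu. repeat destruct Rlt_dec; try destruct Req_dec_T; lra. Qed.

Lemma offs_range L j p : 0 <= offs L j p <= 2.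
Proof. unfold offs. destruct Req_dec_T; [apply offu_range|lra]. Qed.

Lemma pw_mul L j : (100 <= L)%nat -> powerRZ (mv L) (-j) * powerRZ (mv L) (j+1) = mv L.
Proof.
  intro HL. rewrite <- powerRZ_add by (apply Rgt_not_eq, mv_pos; auto).
  replace (-j + (j+1))%Z with 1%Z by lia. simpl. ring.
Qed.

Lemma dl_eq L j : (100 <= L)%nat -> dl L j = powerRZ (mv L) (-j) / mv L.
Proof.
  intro HL. unfold dl. replace (-(j+1))%Z with (-j + -1)%Z by lia.
  rewrite powerRZ_add by (apply Rgt_not_eq, mv_pos; auto). simpl.
  field. apply Rgt_not_eq, mv_pos; auto.
Qed.

Lemma offs_shift L j p q K : (100 <= L)%nat -> fst p = fst q ->
  snd q = snd p + IZR K * powerRZ (mv L) (-j) -> offs L j q = offs L j p.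
Proof.
  intros HL Hf Hs. unfold offs, tof.
  assert (EX : Xof j q = Xof j p) by (unfold Xof; congruence).
  rewrite EX.
  assert (ES : sof L j q = sof L j p + 3 * IZR (K * Z.of_nat L)).
  { unfold sof. rewrite EX, Hs, mult_IZR, <- INR_IZR_INZ.
    pose proof (pw_mul L j HL) as PW.
    set (a := powerRZ (mv L) (-j)) in *. set (b := powerRZ (mv L) (j+1)) in *.
    replace ((snd p + IZR K * a) * b) with (snd p * b + IZR K * (a * b)) by ring.
    rewrite PW. unfold mv. ring. }
  rewrite ES.
  replace ((sof L j p + 3 * IZR (K * Z.of_nat L)) / 3) with (sof L j p / 3 + IZR (K * Z.of_nat L)) by field.
  rewrite Int_part_shift, plus_IZR.
  replace (sof L j p + 3 * IZR (K * Z.of_nat L) -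
      3 * (IZR (Int_part (sof L j p / 3)) + IZR (K * Z.of_nat L)))
    with (sof L j p - 3 * IZR (Int_part (sof L j p / 3))) by ring.
  reflexivity.
Qed.

Lemma pwm j : powerRZ mm (-j) * powerRZ mm (j+1) = 4.
Proof.
  rewrite <- powerRZ_add by (unfold mm; lra).
  replace (-j + (j+1))%Z with 1%Z by lia. simpl. unfold mm. ring.
Qed.

Lemma cc_base L j p0 q0 : (100 <= L)%nat -> baseR L p0 q0 ->
  cc L j (Phi L j p0) = cc L j (Phi L j q0).
Proof.
  intros HL (k & l & i & Hi & Hx & [Hy1 Hy2] & Hq).
  pose proof (mv_pos L HL) as Hmv.
  assert (EX : forall y, Xof j (powerRZ mm (-j) * fst p0, y) = IZR (4*k+i)).
  { intro y. unfold Xof. cbn [fst snd]. rewrite Hx.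
    replace (powerRZ mm (- j) * (IZR k + IZR i / 4) * powerRZ mm (j + 1))
      with (powerRZ mm (-j) * powerRZ mm (j+1) * (IZR k + IZR i / 4)) by ring.
    rewrite pwm, plus_IZR, mult_IZR. field. }
  assert (Hmod : ((4*k+i) mod 4 = i)%Z).
  { rewrite Z.add_comm, Z.mul_comm, Z.mod_add by lia. apply Z.mod_small. lia. }
  assert (ES : forall y, sof L j (powerRZ mm (-j) * fst p0, powerRZ (mv L) (-j) * y)
                 = mv L * y - IZR (i - 1)).
  { intro y. unfold sof. rewrite EX, Int_part_IZR, Hmod. cbn [fst snd].
    pose proof (pw_mul L j HL) as PW.
    set (a := powerRZ (mv L) (-j)) in *. set (b := powerRZ (mv L) (j+1)) in *.
    replace (a * y * b) with (a * b * y) by ring. rewrite PW. ring. }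
  assert (HO : forall y, 3 * IZR l <= mv L * y - IZR (i-1) <= 3 * IZR l + 2 ->
      offs L j (powerRZ mm (-j) * fst p0, powerRZ (mv L) (-j) * y)
                 = offu (mv L * y - IZR (i-1) - 3 * IZR l)).
  { intros y Hb. unfold offs. rewrite EX, Int_part_IZR.
    destruct Req_dec_T as [_|C]; [|contradiction C; reflexivity].
    unfold tof. rewrite ES. rewrite (Int_part_unique _ l); [reflexivity|lra]. }
  assert (B1 : 3 * IZR l + IZR i - 1 <= mv L * snd p0).
  { replace (3 * IZR l + IZR i - 1) with (mv L * ((3 * IZR l + IZR i - 1) / mv L)) by (field; lra).
    apply Rmult_le_compat_l; lra. }
  assert (B2 : mv L * snd p0 <= 3 * IZR l + IZR i).
  { replace (3 * IZR l + IZR i) with (mv L * ((3 * IZR l + IZR i) / mv L)) by (field; lra).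
    apply Rmult_le_compat_l; lra. }
  assert (E1 : mv L * (snd p0 + / mv L) = mv L * snd p0 + 1) by (field; lra).
  rewrite Hq. unfold Phi, cc. cbn [fst snd].
  rewrite !HO; rewrite ?E1, minus_IZR; try lra.
  rewrite dl_eq by exact HL.
  set (t := mv L * snd p0 - (IZR i - 1) - 3 * IZR l).
  replace (mv L * snd p0 + 1 - (IZR i - 1) - 3 * IZR l) with (t + 1) by (unfold t; ring).
  assert (Ht : 0 <= t <= 1) by (unfold t; lra).
  assert (Hu : offu (t + 1) = offu t + 1).
  { unfold offu. repeat destruct Rlt_dec; repeat destruct Req_dec_T; lra. }
  rewrite Hu. field. lra.
Qed.

Lemma cc_relR L j p0 q0 : (100 <= L)%nat -> RelR L p0 q0 -> cc L j (Phi L j p0) = cc L j (Phi L j q0).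
Proof.
  intros HL H. induction H; try congruence. apply cc_base; auto.
Qed.

Lemma inv L j p q : (100 <= L)%nat -> Rj L (Some (j+1)%Z) p q ->
  exists K, cc L j p - cc L j q = IZR K * powerRZ (mv L) (-j).
Proof.
  intros HL H. induction H as [p q [i [Hij H]] | p | p q _ [K IH] | p q r _ [K1 IH1] _ [K2 IH2]].
  - destruct (Z.lt_ge_cases i j) as [Hlt|Hge].
    + destruct (pushR_shift L i p q HL H) as [Hf [K HK]].
      destruct (scale_int L i j HL Hlt) as [M HM].
      assert (Hs : snd q = snd p + IZR (K * M) * powerRZ (mv L) (-j)).
      { rewrite mult_IZR. rewrite HM in HK. lra. }
      pose proof (offs_shift L j p q (K*M) HL Hf Hs) as Ho.
      exists (- (K * M))%Z. unfold cc. rewrite Ho, Hs, opp_IZR. ring.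
    + assert (i = j) by lia. subst i.
      destruct H as (p0 & q0 & HR & -> & ->). exists 0%Z.
      rewrite (cc_relR L j p0 q0 HL HR). ring.
  - exists 0%Z. ring.
  - exists (- K)%Z. rewrite opp_IZR. lra.
  - exists (K1 + K2)%Z. rewrite plus_IZR. lra.
Qed.

Lemma ximg_sat L J S t : (100 <= L)%nat -> ximg (sat L J S) t <-> ximg S t.
Proof.
  intro HL. split.
  - intros (p & (q & Hq & HR) & Ht). exists q. split; auto.
    rewrite <- (Rj_fst L J p q HL HR). auto.
  - intros (p & Hp & Ht). exists p. split; auto. exists p. split; auto.
    apply rst_refl.
Qed.

Theorem mainTheorem6 (L : nat) (HL : (100 <= L)%nat) :
  ((forall (J : option Z) (p q : pt), Rj L J p q -> fst p = fst q) /\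
   (forall (j : Z) (p q : pt), Rj L (Some j) p q ->
      eqmod (powerRZ (mv L) (- j)) (snd p) (snd q))) /\
  (forall j a b : Z, exists u : R,
     (forall t, ximg (sat L (Some j) (closed_cell L j a b)) t <->
                u <= t <= u + powerRZ mm (- j)) /\
     (forall t, ximg (sat L (Some j) (open_cell L j a b)) t <->
                u < t < u + powerRZ mm (- j)) /\
     (forall t, ximg (sat L (Some j) (vert_cell L j a b)) t <-> t = u) /\
     (forall t, ximg (sat L (Some j) (vert_cell L j (a + 1) b)) t <->
                t = u + powerRZ mm (- j))) /\
  (forall (j : Z) (p p' : pt), Rj L (Some (j + 1)%Z) p p' ->
     dS1 (powerRZ (mv L) (- j)) (snd p) (snd p') <= 2 * powerRZ (mv L) (- (j + 1))) /\
  (forall (j a b : Z) (p p' : pt),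
     sat L (Some (j + 1)%Z) (open_cell L (j + 1) a b) p ->
     sat L (Some (j + 1)%Z) (open_cell L (j + 1) a b) p' ->
     dS1 (powerRZ (mv L) (- j)) (snd p) (snd p') <= 5 * powerRZ (mv L) (- (j + 1))).
Proof.
  pose proof (mv_pos L HL) as Hmv.
  split; [split|split; [|split]].
  - intros J p q H. exact (Rj_fst L J p q HL H).
  - intros j p q H. exact (Rj_eqmod L j p q HL H).
  - intros j a b. exists (IZR a * powerRZ mm (-j)).
    assert (Pm : 0 < powerRZ mm (-j)) by (apply powerRZ_lt; unfold mm; lra).
    assert (Pv : 0 < powerRZ (mv L) (-j)) by (apply powerRZ_lt; lra).
    split; [|split; [|split]]; intros t; split; intro Ht; rewrite ximg_sat in * by exact HL.
    + destruct Ht as (p & [[H1 H2] _] & <-). lra.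
    + exists (t, IZR b * powerRZ (mv L) (-j)). repeat split; cbn [fst snd]; lra.
    + destruct Ht as (p & [[H1 H2] _] & <-). lra.
    + exists (t, (IZR b + /2) * powerRZ (mv L) (-j)). repeat split; cbn [fst snd]; lra.
    + destruct Ht as (p & [H1 _] & <-). lra.
    + exists (t, IZR b * powerRZ (mv L) (-j)). repeat split; cbn [fst snd]; lra.
    + destruct Ht as (p & [H1 _] & <-). rewrite plus_IZR in H1. lra.
    + exists (t, IZR b * powerRZ (mv L) (-j)). repeat split; cbn [fst snd]; rewrite ?plus_IZR; lra.
  - intros j p p' H. destruct (inv L j p p' HL H) as [K HK].
    assert (Pv : 0 < powerRZ (mv L) (-j)) by (apply powerRZ_lt; lra).
    eapply Rle_trans; [apply (dS1_le _ _ _ K Pv)|].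
    pose proof (offs_range L j p). pose proof (offs_range L j p').
    assert (Pd : 0 < dl L j) by (apply powerRZ_lt; lra).
    unfold cc in HK. fold (dl L j). apply Rabs_le. split; nra.
  - intros j a b p p' (q & Hq & H) (q' & Hq' & H').
    destruct (inv L j p q HL H) as [K1 HK1].
    destruct (inv L j p' q' HL H') as [K2 HK2].
    assert (Pv : 0 < powerRZ (mv L) (-j)) by (apply powerRZ_lt; lra).
    eapply Rle_trans; [apply (dS1_le _ _ _ (K1 - K2) Pv)|].
    pose proof (offs_range L j p). pose proof (offs_range L j p').
    pose proof (offs_range L j q). pose proof (offs_range L j q').
    assert (Pd : 0 < dl L j) by (apply powerRZ_lt; lra).
    destruct Hq as [_ [Hq1 Hq2]]. destruct Hq' as [_ [Hq1' Hq2']].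
    fold (dl L j) in *. unfold cc in HK1, HK2. rewrite minus_IZR.
    apply Rabs_le. split; nra.
Qed.
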